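(* Let $R_1$ and $R_2$ be finite commutative local principal ideal rings with unity, and let $R=R_1\times R_2$. Suppose $\operatorname{diam}(\Gamma(R_1))\in\{1,2\}$ and $\operatorname{diam}(\Gamma(R_2))=2$. Then $\overline{\Gamma(R)}$ is not a divisor graph.
   Context: For a commutative ring $S$ with unity, $Z(S)$ denotes its set of zero divisors. The zero divisor graph $\Gamma(S)$ is the simple graph with vertex set $Z(S)\setminus\{0\}$, distinct $a,b$ adjacent iff $ab=0$; its complement $\overline{\Gamma(S)}$ has the same vertex set with distinct $a,b$ adjacent iff $ab\neq 0$. The diameter of a graph is the maximum distance (number of edges in a shortest path) between pairs of vertices. A ring is local if it has a unique maximal ideal. For a nonempty set $T$ of positive integers, the divisor graph $G(T)$ has vertex set $T$, with distinct $i,j$ adjacent iff $i\mid j$ or $j\mid i$; a graph is a divisor graph if it is isomorphic to some $G(T)$. *)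

(* Defs.v *)
From HB Require Import structures.
From mathcomp Require Import all_boot all_order all_algebra.
Set Implicit Arguments. Unset Strict Implicit. Unset Printing Implicit Defensive.
Import GRing.Theory.
Local Open Scope ring_scope.

HB.instance Definition _ (R1 R2 : finComNzRingType) := Finite.on (R1 * R2)%type.

Section RingDefs.
Variable S : finComNzRingType.

Definition zero_divisors : {set S} := [set a | [exists b, (b != 0) && (a * b == 0)]].

Definition zdg_vertices : {set S} := zero_divisors :\ 0.

Definition zdg_adj : rel S :=
  fun a b => [&& a \in zdg_vertices, b \in zdg_vertices, a != b & a * b == 0].

Definition zdg_compl_adj : rel S :=
  fun a b => [&& a \in zdg_vertices, b \in zdg_vertices, a != b & a * b != 0].

Definition is_ideal (I : {set S}) : Prop :=
  [/\ (0 : S) \in I,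
      forall a b, a \in I -> b \in I -> a + b \in I &
      forall r a, a \in I -> r * a \in I].

Definition is_maximal_ideal (I : {set S}) : Prop :=
  [/\ is_ideal I, (1 : S) \notin I &
      forall J : {set S}, is_ideal J -> I \subset J -> J = I \/ J = [set: S]].

Definition is_local_ring : Prop :=
  exists M : {set S}, is_maximal_ideal M /\
    forall N : {set S}, is_maximal_ideal N -> N = M.

Definition is_principal_ideal_ring : Prop :=
  forall I : {set S}, is_ideal I -> exists a : S, I = [set r * a | r : S].

End RingDefs.

Section GraphDefs.
Variable T : finType.
Variables (V : {set T}) (e : rel T).

(* within n x y : there is a walk of length at most n from x to y
   (adjacency e is only ever used between vertices of V here) *)
Fixpoint within (n : nat) (x y : T) : bool :=
  if n is n'.+1 then (x == y) || [exists z, [&& z \in V, e x z & within n' z y]]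
  else x == y.

Definition dist_eq (x y : T) (d : nat) : Prop :=
  within d x y /\ (forall k, (k < d)%N -> ~~ within k x y).

Definition diam_eq (d : nat) : Prop :=
  (forall x y, x \in V -> y \in V -> exists2 k, (k <= d)%N & dist_eq x y k) /\
  (exists x y, [/\ x \in V, y \in V & dist_eq x y d]).

(* divisor graph: isomorphic to G(T') for a nonempty set T' of positive integers.
   An isomorphism onto G(f @: V) is an injective map f : V -> positive integers
   such that distinct x, y are adjacent iff f x | f y or f y | f x. *)
Definition is_divisor_graph : Prop :=
  V != set0 /\
  exists f : T -> nat,
    [/\ {in V &, injective f},
        (forall x, x \in V -> (0 < f x)%N) &
        forall x y, x \in V -> y \in V -> x != y ->
          e x y = ((f x %| f y) || (f y %| f x))%N].

End GraphDefs.

Arguments zero_divisors S : clear implicits.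
Arguments zdg_vertices S : clear implicits.
Arguments zdg_adj S : clear implicits.
Arguments zdg_compl_adj S : clear implicits.
Arguments is_local_ring S : clear implicits.
Arguments is_principal_ideal_ring S : clear implicits.

(* Main.v *)
Require Import Defs.
From mathcomp Require Import all_boot all_order all_algebra.
From Stdlib Require Import Classical.
Set Implicit Arguments. Unset Strict Implicit. Unset Printing Implicit Defensive.
Import GRing.Theory.
Local Open Scope ring_scope.

Section RingLemmas.
Variable S : finComNzRingType.

Lemma nonunit_zd (t : S) : ~ (exists u, t * u = 1) -> exists w : S, w != 0 /\ t * w = 0.
Proof.
move=> Hn; apply: NNPP => Hc; apply: Hn.
have inj : injective (fun x : S => t * x).
  move=> a b /= Hab; apply/eqP; rewrite -subr_eq0; apply/negPn/negP => Hne.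
  apply: Hc; exists (a - b); split => //; by rewrite mulrBr Hab subrr.
have [g _ gK] := injF_bij inj.
by exists (g 1); rewrite gK.
Qed.

Lemma ideal_one (I : {set S}) : is_ideal I -> 1 \in I -> I = setT.
Proof.
case=> _ _ Hm H1; apply/setP => r; rewrite inE.
by rewrite -(mulr1 r); apply: Hm.
Qed.

Lemma exists_max n : forall I : {set S}, (#|~: I| <= n)%N -> is_ideal I -> 1 \notin I ->
  exists N, is_maximal_ideal N /\ I \subset N.
Proof.
elim: n => [|n IH] I Hc HI H1.
  move: Hc; rewrite leqn0 cards_eq0 => /eqP HT.
  have : 1 \in ~: I by rewrite inE.
  by rewrite HT inE.
case: (classic (is_maximal_ideal I)) => [HM|HM]; first by exists I.
have : ~ (forall J : {set S}, is_ideal J -> I \subset J -> J = I \/ J = [set: S]).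
  by move=> H; apply: HM; split.
move=> /not_all_ex_not [J HJ].
have HJi : is_ideal J by apply: NNPP => Hn; apply: HJ => Hi; case: (Hn Hi).
have HIJ : I \subset J.
  by apply: NNPP => Hn; apply: HJ => _ Hi; case: (Hn Hi).
have [HJI HJT] : J <> I /\ J <> [set: S].
  by split => Heq; apply: HJ => _ _; [left|right].
have H1J : 1 \notin J by apply/negP => /(ideal_one HJi).
have [N [HN HJN]] : exists N, is_maximal_ideal N /\ J \subset N.
  apply: IH => //.
  have : ~: J \proper ~: I.
    by rewrite properC properEneq HIJ andbT; apply/eqP => E; apply: HJI.
  move/proper_card => Hlt; rewrite -ltnS; exact: leq_trans Hlt Hc.
by exists N; split => //; apply: subset_trans HIJ HJN.
Qed.

Lemma ann_max : is_local_ring S -> is_principal_ideal_ring S ->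
  exists w : S, w != 0 /\ forall z, z \in zero_divisors S -> z * w = 0.
Proof.
move=> [M [HM Huniq]] Hpir.
have HMi := HM; case: HMi => HMid H1M _.
have [t Ht] := Hpir M HMid.
have tM : t \in M by rewrite Ht; apply/imsetP; exists 1 => //; rewrite mul1r.
have tnu : ~ (exists u, t * u = 1).
  case=> u Hu; move/negP: H1M; apply; rewrite -Hu mulrC.
  by case: HMid => _ _; apply.
have [w [w0 tw]] := nonunit_zd tnu.
exists w; split => // z; rewrite inE => /existsP [b /andP [b0 /eqP zb]].
have zM : z \in M.
  have Hid : is_ideal [set r * z | r : S].
    split.
    - by apply/imsetP; exists 0 => //; rewrite mul0r.
    - move=> a c /imsetP [r1 _ ->] /imsetP [r2 _ ->].
      by apply/imsetP; exists (r1 + r2) => //; rewrite mulrDl.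
    - move=> r a /imsetP [r1 _ ->].
      by apply/imsetP; exists (r * r1) => //; rewrite mulrA.
  have H1 : 1 \notin [set r * z | r : S].
    apply/negP => /imsetP [u _ Hu].
    by move/eqP: b0; apply; rewrite -(mul1r b) Hu -mulrA zb mulr0.
  have Hc := max_card (~: [set r * z | r : S]).
  have [N [HN sub]] := exists_max Hc Hid H1.
  rewrite -(Huniq N HN); apply: (subsetP sub); apply/imsetP; exists 1 => //.
  by rewrite mul1r.
move: zM; rewrite Ht => /imsetP [r _ ->].
by rewrite -mulrA tw mulr0.
Qed.

End RingLemmas.

Section GraphLemmas.
Variables (T : finType) (V : {set T}) (e : rel T) (f : T -> nat).
Hypothesis Hinj : {in V &, injective f}.
Hypothesis Hadj : forall x y, x \in V -> y \in V -> x != y ->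
          e x y = ((f x %| f y) || (f y %| f x))%N.

Lemma flip a b : a \in V -> b \in V -> a != b -> e a b ->
  (f b %| f a)%N = ~~ (f a %| f b)%N.
Proof.
move=> aV bV ab; rewrite Hadj //.
case Hab: (f a %| f b)%N; case Hba: (f b %| f a)%N => //= _.
by case/eqP: ab; apply: Hinj => //; apply/eqP; rewrite eqn_dvd Hab Hba.
Qed.

Lemma forcing a b c : a \in V -> b \in V -> c \in V -> a != b -> a != c -> b != c ->
  e a b -> e a c -> ~~ e b c -> (f a %| f b)%N = (f a %| f c)%N.
Proof.
move=> aV bV cV ab ac bc; rewrite !Hadj // => Hab Hac.
case Hbc: (f b %| f c)%N; first by [].
case Hcb: (f c %| f b)%N; first by [].
move=> _.
case Hx: (f a %| f b)%N; case Hy: (f a %| f c)%N => //.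
- move: Hac; rewrite Hy /= => Hca.
  by move: Hcb; rewrite (dvdn_trans Hca Hx).
- move: Hab; rewrite Hx /= => Hba.
  by move: Hbc; rewrite (dvdn_trans Hba Hy).
Qed.

End GraphLemmas.

Lemma inV (S : finComNzRingType) (a b : S) : a != 0 -> b != 0 -> a * b = 0 ->
  a \in zdg_vertices S.
Proof.
move=> a0 b0 ab; rewrite /zdg_vertices /zero_divisors in_setD1 a0 inE /=.
by apply/existsP; exists b; rewrite b0 ab eqxx.
Qed.

Lemma Vnz (S : finComNzRingType) (a : S) : a \in zdg_vertices S -> a != 0.
Proof. by rewrite in_setD1 => /andP []. Qed.

Lemma Vzd (S : finComNzRingType) (a : S) : a \in zdg_vertices S -> a \in zero_divisors S.
Proof. by rewrite in_setD1 => /andP []. Qed.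

Lemma edge_of_diam (S : finComNzRingType) d : (0 < d)%N ->
  diam_eq (zdg_vertices S) (zdg_adj S) d ->
  exists x1 x2 : S, [/\ x1 != 0, x2 != 0 & x1 * x2 = 0].
Proof.
case: d => // d _ [_ [x [y [xV yV [Hw Hk]]]]].
move: Hw => /= /orP [/eqP xy|].
  by have := Hk 0%N isT; rewrite /= xy eqxx.
case/existsP => z /and3P [zV /and4P [_ _ _ /eqP xz] _].
by exists x, z; split => //; apply: Vnz.
Qed.

Section Main.
Variables R1 R2 : finComNzRingType.
Local Notation R := (R1 * R2)%type.

Lemma pneq0 (p : R) : (p.1 != 0) || (p.2 != 0) -> p != 0.
Proof.
case/orP => H; apply/eqP => E; move: H; by rewrite E eqxx.
Qed.

Lemma pneq (p q : R) : (p.1 != q.1) || (p.2 != q.2) -> p != q.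
Proof.
case/orP => H; apply/eqP => E; move: H; by rewrite E eqxx.
Qed.

Lemma pmulE (a b : R) : a * b = (a.1 * b.1, a.2 * b.2).
Proof. by []. Qed.

Lemma pzeroE : (0 : R) = (0, 0).
Proof. by []. Qed.

Lemma mkE (a b : R) : a \in zdg_vertices R -> b \in zdg_vertices R -> a != b ->
  a * b != 0 -> zdg_compl_adj R a b.
Proof. by move=> *; apply/and4P. Qed.

Lemma mkN (a b : R) : a * b = 0 -> ~~ zdg_compl_adj R a b.
Proof. by move=> H; rewrite /zdg_compl_adj H eqxx !andbF. Qed.

End Main.

Theorem theorem2p6 (R1 R2 : finComNzRingType) :
  is_local_ring R1 -> is_principal_ideal_ring R1 ->
  is_local_ring R2 -> is_principal_ideal_ring R2 ->
  (diam_eq (zdg_vertices R1) (zdg_adj R1) 1 \/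
   diam_eq (zdg_vertices R1) (zdg_adj R1) 2) ->
  diam_eq (zdg_vertices R2) (zdg_adj R2) 2 ->
  ~ is_divisor_graph (zdg_vertices (R1 * R2)%type) (zdg_compl_adj (R1 * R2)%type).
Proof.
move=> _ _ HL2 HP2 H1 H2 [_ [f [Hinj _ Hadj]]].
have [x1 [x2 [x10 x20 x12]]] : exists x1 x2 : R1, [/\ x1 != 0, x2 != 0 & x1 * x2 = 0].
  by case: H1 => H; apply: edge_of_diam H.
have x21 : x2 * x1 = 0 by rewrite mulrC.
have [y1 [y2 [y1V y2V y12]]] : exists y1 y2 : R2,
    [/\ y1 \in zdg_vertices R2, y2 \in zdg_vertices R2 & y1 * y2 != 0].
  case: H2 => _ [x [y [xV yV [_ Hk]]]].
  have := Hk 1%N isT; rewrite /= negb_or => /andP [xy /existsP Hn].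
  exists x, y; split => //; apply/negP => /eqP xy0.
  apply: Hn; exists y; rewrite yV eqxx andbT /zdg_adj xV yV xy0 eqxx andbT /=.
  by have := Hk 0%N isT.
have [w [w0 Hw]] := ann_max HL2 HP2.
have y10 := Vnz y1V; have y20 := Vnz y2V.
have y1w : y1 * w = 0 by apply: Hw; apply: Vzd.
have y2w : y2 * w = 0 by apply: Hw; apply: Vzd.
have ww : w * w = 0.
  apply: Hw; rewrite inE; apply/existsP; exists y1; by rewrite y10 mulrC y1w eqxx.
have wy1 : w * y1 = 0 by rewrite mulrC.
have wy2 : w * y2 = 0 by rewrite mulrC.
pose P : (R1 * R2)%type := (0, 1).
pose W : (R1 * R2)%type := (0, w).
pose Q : (R1 * R2)%type := (1, w).
pose X : (R1 * R2)%type := (x1, 0).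
pose S : (R1 * R2)%type := (x2, y1).
pose Y : (R1 * R2)%type := (0, y2).
pose E : (R1 * R2)%type := (1, 0).
have o1 : (1 : R1) != 0 := oner_neq0 _.
have o2 : (1 : R2) != 0 := oner_neq0 _.
have simp := (mul0r, mulr0, mul1r, mulr1, eqxx, o1, o2, x10, x20, x12, x21, y10, y20, y12, w0, y1w, y2w, ww, wy1, wy2).
have PV : P \in zdg_vertices (R1 * R2)%type.
  by apply: (@inV _ _ (1, 0)); [apply: pneq0|apply: pneq0|rewrite pmulE pzeroE]; rewrite /= ?simp ?simp2 ?oner_neq0 ?orbT.
have WV : W \in zdg_vertices (R1 * R2)%type.
  by apply: (@inV _ _ (1, 0)); [apply: pneq0|apply: pneq0|rewrite pmulE pzeroE]; rewrite /= ?simp ?simp2 ?oner_neq0 ?orbT.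
have QV : Q \in zdg_vertices (R1 * R2)%type.
  by apply: (@inV _ _ (0, y1)); [apply: pneq0|apply: pneq0|rewrite pmulE pzeroE]; rewrite /= ?simp ?simp2 ?oner_neq0 ?orbT.
have XV : X \in zdg_vertices (R1 * R2)%type.
  by apply: (@inV _ _ (0, 1)); [apply: pneq0|apply: pneq0|rewrite pmulE pzeroE]; rewrite /= ?simp ?simp2 ?oner_neq0 ?orbT.
have SV : S \in zdg_vertices (R1 * R2)%type.
  by apply: (@inV _ _ (x1, w)); [apply: pneq0|apply: pneq0|rewrite pmulE pzeroE]; rewrite /= ?simp ?simp2 ?oner_neq0 ?orbT.
have YV : Y \in zdg_vertices (R1 * R2)%type.
  by apply: (@inV _ _ (1, 0)); [apply: pneq0|apply: pneq0|rewrite pmulE pzeroE]; rewrite /= ?simp ?simp2 ?oner_neq0 ?orbT.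
have EV : E \in zdg_vertices (R1 * R2)%type.
  by apply: (@inV _ _ (0, 1)); [apply: pneq0|apply: pneq0|rewrite pmulE pzeroE]; rewrite /= ?simp ?simp2 ?oner_neq0 ?orbT.
have x2n1 : x2 != 1 by apply/eqP => E1; move: x12; rewrite E1 mulr1; apply/eqP.
have wn1 : w != 1 by apply/eqP => E1; move: ww; rewrite E1 mulr1; apply/eqP.
have s1 : 1 != w by rewrite eq_sym.
have s2 : 1 != x2 by rewrite eq_sym.
have s3 : 0 != x2 by rewrite eq_sym.
have s4 : 0 != x1 by rewrite eq_sym.
have s5 : 0 != w by rewrite eq_sym.
have s6 : 0 != y1 by rewrite eq_sym.
have s7 : 0 != y2 by rewrite eq_sym.
have s8 : (0:R1) != 1 by rewrite eq_sym.
have s9 : (0:R2) != 1 by rewrite eq_sym.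
have simp2 := (x2n1, wn1, s1, s2, s3, s4, s5, s6, s7, s8, s9).
have eE : forall a b : (R1 * R2)%type, a \in zdg_vertices (R1 * R2)%type ->
   b \in zdg_vertices (R1 * R2)%type ->
   (a.1 != b.1) || (a.2 != b.2) -> (a.1 * b.1 != 0) || (a.2 * b.2 != 0) ->
   zdg_compl_adj (R1 * R2)%type a b.
  move=> a b aV bV ab Hm; apply: mkE => //; first exact: pneq ab.
  by rewrite pmulE; apply: pneq0.
have nE : forall a b : (R1 * R2)%type, a.1 * b.1 = 0 -> a.2 * b.2 = 0 ->
   ~~ zdg_compl_adj (R1 * R2)%type a b.
  by move=> [a1 a2] [b1 b2] /= h1 h2; apply: mkN; rewrite pmulE /= h1 h2.
have dE : forall a b : (R1 * R2)%type, (a.1 != b.1) || (a.2 != b.2) -> a != b.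
  by move=> a b; apply: pneq.
have eSimp := (simp, simp2).
have ePW : zdg_compl_adj (R1 * R2)%type P W by apply: eE => //=; rewrite ?simp ?simp2 ?oner_neq0 ?orbT.
have ePQ : zdg_compl_adj (R1 * R2)%type P Q by apply: eE => //=; rewrite ?simp ?simp2 ?oner_neq0 ?orbT.
have eQP : zdg_compl_adj (R1 * R2)%type Q P by apply: eE => //=; rewrite ?simp ?simp2 ?oner_neq0 ?orbT.
have eQX : zdg_compl_adj (R1 * R2)%type Q X by apply: eE => //=; rewrite ?simp ?simp2 ?oner_neq0 ?orbT.
have eQS : zdg_compl_adj (R1 * R2)%type Q S by apply: eE => //=; rewrite ?simp ?simp2 ?oner_neq0 ?orbT.
have eSQ : zdg_compl_adj (R1 * R2)%type S Q by apply: eE => //=; rewrite ?simp ?simp2 ?oner_neq0 ?orbT.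
have eSY : zdg_compl_adj (R1 * R2)%type S Y by apply: eE => //=; rewrite ?simp ?simp2 ?oner_neq0 ?orbT.
have eSE : zdg_compl_adj (R1 * R2)%type S E by apply: eE => //=; rewrite ?simp ?simp2 ?oner_neq0 ?orbT.
have eSP : zdg_compl_adj (R1 * R2)%type S P by apply: eE => //=; rewrite ?simp ?simp2 ?oner_neq0 ?orbT.
have ePS : zdg_compl_adj (R1 * R2)%type P S by apply: eE => //=; rewrite ?simp ?simp2 ?oner_neq0 ?orbT.
have nWQ : ~~ zdg_compl_adj (R1 * R2)%type W Q by apply: nE; rewrite /= ?simp ?simp2 ?oner_neq0 ?orbT.
have nPX : ~~ zdg_compl_adj (R1 * R2)%type P X by apply: nE; rewrite /= ?simp ?simp2 ?oner_neq0 ?orbT.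
have nXS : ~~ zdg_compl_adj (R1 * R2)%type X S by apply: nE; rewrite /= ?simp ?simp2 ?oner_neq0 ?orbT.
have nQY : ~~ zdg_compl_adj (R1 * R2)%type Q Y by apply: nE; rewrite /= ?simp ?simp2 ?oner_neq0 ?orbT.
have nYE : ~~ zdg_compl_adj (R1 * R2)%type Y E by apply: nE; rewrite /= ?simp ?simp2 ?oner_neq0 ?orbT.
have nEP : ~~ zdg_compl_adj (R1 * R2)%type E P by apply: nE; rewrite /= ?simp ?simp2 ?oner_neq0 ?orbT.
have nSW : ~~ zdg_compl_adj (R1 * R2)%type S W by apply: nE; rewrite /= ?simp ?simp2 ?oner_neq0 ?orbT.
have dd : forall a b : (R1 * R2)%type, zdg_compl_adj (R1 * R2)%type a b -> a != b.
  by move=> a b /and4P [].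
have dWQ : W != Q by apply: dE; rewrite /= ?simp ?simp2 ?oner_neq0 ?orbT.
have dPX : P != X by apply: dE; rewrite /= ?simp ?simp2 ?oner_neq0 ?orbT.
have dXS : X != S by apply: dE; rewrite /= ?simp ?simp2 ?oner_neq0 ?orbT.
have dQY : Q != Y by apply: dE; rewrite /= ?simp ?simp2 ?oner_neq0 ?orbT.
have dYE : Y != E by apply: dE; rewrite /= ?simp ?simp2 ?oner_neq0 ?orbT.
have dEP : E != P by apply: dE; rewrite /= ?simp ?simp2 ?oner_neq0 ?orbT.
have dSW : S != W by apply: dE; rewrite /= ?simp ?simp2 ?oner_neq0 ?orbT.
have Fo := forcing Hadj.
have Fl := flip Hinj Hadj.
have h1 := Fo P W Q PV WV QV (dd _ _ ePW) (dd _ _ ePQ) dWQ ePW ePQ nWQ.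
have h2 := Fo Q P X QV PV XV (dd _ _ eQP) (dd _ _ eQX) dPX eQP eQX nPX.
have h3 := Fo Q X S QV XV SV (dd _ _ eQX) (dd _ _ eQS) dXS eQX eQS nXS.
have h4 := Fo S Q Y SV QV YV (dd _ _ eSQ) (dd _ _ eSY) dQY eSQ eSY nQY.
have h5 := Fo S Y E SV YV EV (dd _ _ eSY) (dd _ _ eSE) dYE eSY eSE nYE.
have h6 := Fo S E P SV EV PV (dd _ _ eSE) (dd _ _ eSP) dEP eSE eSP nEP.
have h7 := Fo P S W PV SV WV (dd _ _ ePS) (dd _ _ ePW) dSW ePS ePW nSW.
have f1 := Fl P Q PV QV (dd _ _ ePQ) ePQ.
have f2 := Fl Q S QV SV (dd _ _ eQS) eQS.
have f3 := Fl S P SV PV (dd _ _ eSP) eSP.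
move: h7; rewrite f3 -h6 -h5 -h4 f2 negbK -h3 -h2 f1 -h1.
by case: (f P %| f W)%N.
Qed.
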